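(* Let $P$ be a convex euclidean $p$-gon, and let $r\le p-1$ be the rank of the abelian group generated by the translations in the sides of $P$. Then the complexity $f(n)$ of the outer billiard about $P$ satisfies $f(n)\prec n^{r+2}$.
   Context: The translations in the sides of $P$ are the compositions $T_aT_b$ of point reflections $T_a(x)=2a-x$, $T_b(x)=2b-x$ in the endpoints $a,b$ of a side (translations by $2(a-b)$). Outer billiard: $X=\mathbb R^2\setminus P$ is partitioned by the rays extending the sides of $P$ (ray extending side $ab$ beyond $a$, vertices counterclockwise) into regions $X_a$ indexed by vertices ($X_a$ = points $x$ such that the line through $x$ and $a$ supports $P$ with $P$ on a fixed side); the map is $T=T_a$ on $X_a$. A point is regular if no iterate lies on the rays; its length-$n$ code is the word $a_1\cdots a_n$ with $T^{i-1}x\in X_{a_i}$; $f(n)$ is the number of distinct codes of length $n$. $g\prec h$ means $g(n)\le Ch(n)$ for some $C$ and all large $n$. *)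

(* Defs.v *)
From HB Require Import structures.
From mathcomp Require Import all_boot all_order all_algebra.
From mathcomp Require Import boolp reals.
Set Implicit Arguments. Unset Strict Implicit. Unset Printing Implicit Defensive.
Import Order.TTheory GRing.Theory Num.Theory.
Local Open Scope ring_scope.

Section OuterBilliard.
Variable R : realType.

Definition pt := (R * R)%type.
Definition psub (a b : pt) : pt := (a.1 - b.1, a.2 - b.2).
(* cross product: > 0 iff b is strictly to the left of a *)
Definition cross (a b : pt) : R := a.1 * b.2 - a.2 * b.1.
Definition prefl (a x : pt) : pt := (2 * a.1 - x.1, 2 * a.2 - x.2).

Definition nxt {p : nat} (i : 'I_p) : 'I_p :=
  Ordinal (ltn_pmod i.+1 (leq_ltn_trans (leq0n i) (ltn_ord i))).

Definition convex_ccw {p : nat} (v : 'I_p -> pt) : Prop :=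
  forall i j : 'I_p, j != i -> j != nxt i ->
    0 < cross (psub (v (nxt i)) (v i)) (psub (v j) (v i)).

(* X_a (with the singular rays removed): the line through x and the vertex a
   supports P, with P (except a) strictly on the left of the directed line
   x -> a.  Such x automatically lies outside P; the union of these open
   regions is the complement in R^2 \ P of the rays extending each side
   v_i v_{i+1} beyond v_i. *)
Definition inX {p : nat} (v : 'I_p -> pt) (a : 'I_p) (x : pt) : Prop :=
  forall b : 'I_p, b != a -> 0 < cross (psub (v a) x) (psub (v b) x).

Fixpoint orb {p : nat} (v : 'I_p -> pt) (x : pt) (s : nat -> 'I_p) (k : nat)
  : pt :=
  match k with
  | 0 => x
  | k'.+1 => prefl (v (s k')) (orb v x s k')
  end.

(* s is the (infinite) itinerary of x under the outer billiard map T: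
   T^k x lies in X_{s k} for all k.  A point x is regular iff it has such an
   itinerary (which is then unique, the X_a being disjoint). *)
Definition itinerary {p : nat} (v : 'I_p -> pt) (x : pt) (s : nat -> 'I_p)
  : Prop := forall k, inX v (s k) (orb v x s k).

Definition codes {p : nat} (v : 'I_p -> pt) (n : nat) : {set n.-tuple 'I_p} :=
  [set w : n.-tuple 'I_p |
     `[< exists (x : pt) (s : nat -> 'I_p),
           itinerary v x s /\ forall i : 'I_n, tnth w i = s i >]].

Definition complexity {p : nat} (v : 'I_p -> pt) (n : nat) : nat :=
  #|codes v n|.

(* translation in the side v_i v_{i+1}: T_{v_i} T_{v_{i+1}} = translation by
   2 (v_i - v_{i+1}) *)
Definition side_transl {p : nat} (v : 'I_p -> pt) (i : 'I_p) : pt :=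
  (2 * (v i).1 - 2 * (v (nxt i)).1, 2 * (v i).2 - 2 * (v (nxt i)).2).

Definition zindep {p : nat} (t : 'I_p -> pt) (S : {set 'I_p}) : Prop :=
  forall c : 'I_p -> int,
    \sum_(i in S) (c i)%:~R * (t i).1 = 0 ->
    \sum_(i in S) (c i)%:~R * (t i).2 = 0 ->
    forall i, i \in S -> c i = 0.

(* rank of the (torsion-free, finitely generated) abelian subgroup of R^2
   generated by the t_i = the maximal size of a Z-independent subfamily *)
Definition group_rank {p : nat} (t : 'I_p -> pt) : nat :=
  \max_(S : {set 'I_p} | `[< zindep t S >]) #|S|.

Definition transl_rank {p : nat} (v : 'I_p -> pt) : nat :=
  group_rank (side_transl v).

End OuterBilliard.

(* Main.v *)
Require Import Defs.
From HB Require Import structures.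
From mathcomp Require Import all_boot all_order all_algebra.
From mathcomp Require Import boolp reals.
From mathcomp Require Import ring lra zify.
Set Implicit Arguments. Unset Strict Implicit. Unset Printing Implicit Defensive.
Import Order.TTheory GRing.Theory Num.Theory.
Local Open Scope ring_scope.

Section Basic.
Variable R : realType.
Variable p : nat.
Variable v : 'I_p -> pt R.

Definition con (a b : 'I_p) (y : pt R) : R := cross (psub (v a) y) (psub (v b) y).

Lemma conE a b y : con a b y =
  ((v a).1 - y.1) * ((v b).2 - y.2) - ((v a).2 - y.2) * ((v b).1 - y.1).
Proof. by []. Qed.

Lemma inX_con a y : inX v a y <-> forall b, b != a -> 0 < con a b y.
Proof. by []. Qed.

Lemma inX_disj a a' y : a != a' -> inX v a y -> inX v a' y -> False.
Proof.
move=> ne h1 h2.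
have B := h2 a ne. rewrite eq_sym in ne.
have A := h1 a' ne. move: A B.
rewrite /cross /psub /= => A B. nra.
Qed.

Lemma con_comb a b y y' (l : R) :
  con a b ((1 - l) * y.1 + l * y'.1, (1 - l) * y.2 + l * y'.2) =
  (1 - l) * con a b y + l * con a b y'.
Proof. rewrite !conE /=. ring. Qed.

Lemma backward a a' z z' : inX v a z -> inX v a' z' ->
  prefl (v a) z = prefl (v a') z' -> a = a'.
Proof.
move=> h1 h2 e; apply/eqP; apply/negPn/negP => ne.
have B := h2 a ne. rewrite eq_sym in ne.
have A := h1 a' ne.
case: e => e1 e2.
have E1 : z'.1 = 2 * (v a').1 - 2 * (v a).1 + z.1 by lra.
have E2 : z'.2 = 2 * (v a').2 - 2 * (v a).2 + z.2 by lra.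
move: A B; rewrite /cross /psub /= E1 E2 => A B. nra.
Qed.


Lemma orb_ext x s s' k : (forall i, (i < k)%N -> s i = s' i) ->
  orb v x s k = orb v x s' k.
Proof.
elim: k => [//|k IH] h /=.
rewrite IH ?h // => i hi; apply: h; exact: ltnW.
Qed.

Lemma orb_add x s k m :
  orb v x s (k + m) = orb v (orb v x s k) (fun i => s (k + i)%N) m.
Proof. elim: m => [|m IH]; first by rewrite addn0. by rewrite addnS /= IH. Qed.

Definition opt : pt R := (0, 0).

Lemma orb_aff x s k :
  (orb v x s k).1 = (-1) ^+ k * x.1 + (orb v opt s k).1 /\
  (orb v x s k).2 = (-1) ^+ k * x.2 + (orb v opt s k).2.
Proof.
elim: k => [|k [IH1 IH2]] /=; first by rewrite expr0 !mul1r !addr0.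
rewrite IH1 IH2 exprS; split; ring.
Qed.

Definition Dn s x n := forall k, (k < n)%N -> inX v (s k) (orb v x s k).

Lemma Dn_ext s s' x n : (forall i, (i < n)%N -> s i = s' i) -> Dn s x n -> Dn s' x n.
Proof.
move=> e h k kn.
have -> : orb v x s' k = orb v x s k.
  by apply: orb_ext => i ik; rewrite e // (ltn_trans ik kn).
by rewrite -(e k kn); apply: h.
Qed.

Lemma prefl_inj (a z z' : pt R) : prefl a z = prefl a z' -> z = z'.
Proof.
case: z => z1 z2; case: z' => z1' z2'; rewrite /prefl /= => -[e1 e2].
by congr pair; lra.
Qed.

Lemma back_uniq n : forall s s' x x', Dn s x n -> Dn s' x' n ->
  orb v x s n = orb v x' s' n -> forall k, (k < n)%N -> s k = s' k.
Proof.
elim: n => [//|n IH] s s' x x' h h' /= e.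
have ln := backward (h n (ltnSn n)) (h' n (ltnSn n)) e.
rewrite ln in e; have {}e := prefl_inj e.
move=> k; rewrite ltnS leq_eqVlt => /orP [/eqP -> //|kn].
apply: (IH s s' x x') => // j jn.
  exact: h (ltn_trans jn (ltnSn n)).
exact: h' (ltn_trans jn (ltnSn n)).
Qed.

Definition pcomb (x x' : pt R) (l : R) : pt R :=
  ((1 - l) * x.1 + l * x'.1, (1 - l) * x.2 + l * x'.2).

Lemma orb_comb x x' s k l :
  orb v (pcomb x x' l) s k = pcomb (orb v x s k) (orb v x' s k) l.
Proof.
have [a1 a2] := orb_aff (pcomb x x' l) s k.
have [b1 b2] := orb_aff x s k.
have [c1 c2] := orb_aff x' s k.
rewrite /pcomb; case: (orb v (pcomb x x' l) s k) a1 a2 => y1 y2 /= -> ->.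
rewrite b1 b2 c1 c2 /=; congr pair; ring.
Qed.

Lemma Dn_convex s x x' n l : Dn s x n -> Dn s x' n -> 0 <= l <= 1 ->
  Dn s (pcomb x x' l) n.
Proof.
move=> h h' /andP [l0 l1] k kn b bk.
rewrite orb_comb /pcomb.
have := con_comb (s k) b (orb v x s k) (orb v x' s k) l; rewrite /con => ->.
have A := h k kn b bk; have B := h' k kn b bk.
rewrite /con in A B *. nra.
Qed.


Definition zl (a b : 'I_p) (t : R) : pt R :=
  ((v a).1 + t * ((v b).1 - (v a).1), (v a).2 + t * ((v b).2 - (v a).2)).

Lemma on_line a b (Y : pt R) : con a b Y = 0 -> v a != v b ->
  exists t, Y = zl a b t.
Proof.
rewrite conE => h ne.
have dd : ((v b).1 - (v a).1) ^+ 2 + ((v b).2 - (v a).2) ^+ 2 != 0.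
  apply/negP => /eqP h2; move: ne.
  case: (v a) h2 => [a1 a2]; case: (v b) => [b1 b2] /= h2.
  move/eqP: h2; rewrite paddr_eq0 ?sqr_ge0 // !sqrf_eq0 !subr_eq0.
  by case/andP => /eqP -> /eqP ->; rewrite eqxx.
set d1 := (v b).1 - (v a).1 in dd *; set d2 := (v b).2 - (v a).2 in dd *.
exists (((Y.1 - (v a).1) * d1 + (Y.2 - (v a).2) * d2) / (d1 ^+ 2 + d2 ^+ 2)).
case: Y h => [y1 y2] /= h; rewrite /zl -/d1 -/d2; congr pair.
  apply: (mulIf dd); rewrite mulrDl [_ / _ * d1]mulrAC divfK //.
  apply/eqP; rewrite -subr_eq0; apply/eqP.
  by rewrite -[RHS](mulr0 (- d2)) -h /d1 /d2; ring.
apply: (mulIf dd); rewrite mulrDl [_ / _ * d2]mulrAC divfK //.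
apply/eqP; rewrite -subr_eq0; apply/eqP.
by rewrite -[RHS](mulr0 d1) -h /d1 /d2; ring.
Qed.

Lemma split_line s x x' n a a' : Dn s x n -> Dn s x' n ->
  inX v a (orb v x s n) -> inX v a' (orb v x' s n) -> a != a' ->
  exists x'' b t, [/\ Dn s x'' n, b != a & orb v x'' s n = zl a b t].
Proof.
move=> hx hx' ha ha' ne.
set y := orb v x s n; set y' := orb v x' s n.
have [b /andP [nb g1le]] : exists b, (b != a) && (con a b y' <= 0).
  case: (boolP [exists b, (b != a) && (con a b y' <= 0)]) => [/existsP //|/existsPn H].
  exfalso.
  apply: (inX_disj ne _ ha') => b nb.
  by move: (H b); rewrite nb /= -ltNge.
have g0 := ha b nb.
have dz : con a b y - con a b y' != 0.
  by apply/negP => /eqP h; rewrite /con in h g1le; lra.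
set l := con a b y / (con a b y - con a b y').
have l01 : 0 <= l <= 1.
  rewrite /l; apply/andP; split.
    apply: divr_ge0; rewrite /con in g1le *; lra.
  rewrite ler_pdivrMr; last by rewrite /con in g1le *; lra.
  rewrite /con in g1le *; lra.
have hl : con a b (pcomb y y' l) = 0.
  rewrite /pcomb con_comb /l; field; exact: dz.
have nvab : v a != v b.
  apply/negP => /eqP e; move: g0; rewrite /cross /psub e; lra.
have [t ht] := on_line hl nvab.
exists (pcomb x x' l), b, t; split => //.
  exact: Dn_convex.
by rewrite orb_comb.
Qed.

End Basic.


Lemma count_intervals (R : realType) (T G : finType) (U : {set T})
  (J : T -> R -> Prop) (rho : G -> R) :
  (forall u u' t, u \in U -> u' \in U -> u != u' -> J u t -> J u' t -> False) ->
  (forall u, u \in U -> exists t, J u t) ->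
  (forall u t t', u \in U -> t < t' -> J u t' ->
      (forall g, ~ (t <= rho g /\ rho g < t')) -> J u t) ->
  (#|U| <= #|G|.+1)%N.
Proof.
move=> Hd Hne Hl.
have hex : forall u, exists t, u \in U -> J u t.
  move=> u; case: (boolP (u \in U)) => uU.
    by have [t ht] := Hne u uU; exists t.
  by exists 0.
have [tf htf] := choice hex.
pose Phi u := #|[set g | rho g < tf u]|.
pose f u : 'I_(#|G|.+1) := inord (Phi u).
have claim : forall u u', u \in U -> u' \in U -> u != u' -> Phi u = Phi u' ->
    tf u < tf u' -> False.
  move=> u u' uU u'U ne eP lt.
  have sAB : [set g | rho g < tf u] \subset [set g | rho g < tf u'].
    apply/subsetP => g; rewrite !inE => h; exact: lt_trans h lt.
  have := subset_leqif_card sAB; rewrite /Phi in eP; rewrite eP => -[_].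
  rewrite eqxx => /esym sBA.
  apply: (Hd u u' (tf u) uU u'U ne (htf u uU)).
  apply: (Hl u' (tf u) (tf u') u'U lt (htf u' u'U)) => g [h1 h2].
  have : g \in [set g | rho g < tf u'] by rewrite inE.
  move/(subsetP sBA); rewrite inE => h3.
  by move: h1; rewrite leNgt h3.
have finj : {in U &, injective f}.
  move=> u u' uU u'U /(congr1 val); rewrite /f /= !inordK; last 2 first.
  - by rewrite ltnS max_card.
  - by rewrite ltnS max_card.
  move=> eP; apply/eqP/negPn/negP => ne.
  case: (ltgtP (tf u) (tf u')) => lt.
  - exact: claim ne eP lt.
  - by apply: (claim u' u) => //; rewrite eq_sym.
  - by apply: (Hd u u' (tf u) uU u'U ne (htf u uU)); rewrite lt; apply: htf.
rewrite -(card_in_imset finj).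
by apply: leq_trans (max_card _) _; rewrite card_ord.
Qed.


Section Rank.
Variable R : realType.
Variable p : nat.
Variable v : 'I_p -> pt R.
Hypothesis hp : (0 < p)%N.
Definition i0 : 'I_p := Ordinal hp.
Local Notation tr := (side_transl v).

Lemma two_v_aux k (hk : (k < p)%N) :
  2 * (v (Ordinal hk)).1 = 2 * (v i0).1 - \sum_(i < p | (i < k)%N) (tr i).1 /\
  2 * (v (Ordinal hk)).2 = 2 * (v i0).2 - \sum_(i < p | (i < k)%N) (tr i).2.
Proof.
elim: k hk => [|k IH] hk.
  have -> : Ordinal hk = i0 by apply: val_inj.
  by rewrite !big_pred0 ?subr0.
have hk' : (k < p)%N by apply: ltnW.
have [IH1 IH2] := IH hk'.
have hn : nxt (Ordinal hk') = Ordinal hk.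
  by apply: val_inj; rewrite /= modn_small.
have eb : forall F : 'I_p -> R, \sum_(i < p | (i < k.+1)%N && (i != Ordinal hk')) F i =
   \sum_(i < p | (i < k)%N) F i.
  move=> F; apply: eq_bigl => i; rewrite ltnS leq_eqVlt -val_eqE /=.
  by case: ltngtP.
split; rewrite (bigD1 (Ordinal hk')) //= eb /side_transl hn /=; lra.
Qed.

Lemma two_v (a : 'I_p) :
  2 * (v a).1 = 2 * (v i0).1 - \sum_(i < p | (i < a)%N) (tr i).1 /\
  2 * (v a).2 = 2 * (v i0).2 - \sum_(i < p | (i < a)%N) (tr i).2.
Proof. by case: a => a ha; apply: two_v_aux. Qed.

Lemma Qrep m (w : nat -> 'I_p) : exists K : 'I_p -> int,
  (forall i, - (m%:Z) <= K i <= m%:Z) /\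
  (orb v ((0:R), (0:R)) w m).1 = (odd m)%:R * (2 * (v i0).1) + \sum_i (K i)%:~R * (tr i).1 /\
  (orb v ((0:R), (0:R)) w m).2 = (odd m)%:R * (2 * (v i0).2) + \sum_i (K i)%:~R * (tr i).2.
Proof.
elim: m => [|m [K [hK [e1 e2]]]].
  exists (fun _ => 0); split; first by move=> i; rewrite lexx.
  by rewrite /= !big1 ?mul0r ?addr0 // => i _; rewrite mul0r.
exists (fun i => - K i - ((i < w m)%N : nat)%:Z); split.
  move=> i; have := hK i; case: (i < w m)%N => /=; lia.
have [t1 t2] := two_v (w m).
have sp : forall F : 'I_p -> R,
   \sum_i (- K i - ((i < w m)%N : nat)%:Z)%:~R * F i =
   - \sum_i (K i)%:~R * F i - \sum_(i < p | (i < w m)%N) F i.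
  move=> F; rewrite -sumrN [X in _ - X]big_mkcond -sumrB; apply: eq_bigr => i _.
  rewrite intrD intrN; case: (i < w m)%N => /=; ring.
rewrite /= !sp e1 e2 /=.
have ob : ((~~ odd m)%:R : R) = 1 - (odd m)%:R by case: (odd m) => /=; ring.
rewrite ob; split; lra.
Qed.


Lemma rank_basis : exists S0 : {set 'I_p}, #|S0| = transl_rank v /\
  forall j, exists d : int, d != 0 /\ exists e : 'I_p -> int,
    d%:~R * (tr j).1 = \sum_(i in S0) (e i)%:~R * (tr i).1 /\
    d%:~R * (tr j).2 = \sum_(i in S0) (e i)%:~R * (tr i).2.
Proof.
have ne : (0 < #|[pred S : {set 'I_p} | `[< zindep tr S >]]|)%N.
  apply/card_gt0P; exists set0; rewrite inE; apply/asboolP => c _ _ i.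
  by rewrite inE.
have [S0 hS0 eS] := @eq_bigmax_cond _ [pred S : {set 'I_p} | `[< zindep tr S >]]
  (fun S => #|S|) ne.
rewrite inE in hS0; move/asboolP: hS0 => hS0.
have eS' : transl_rank v = #|S0| by rewrite -eS.
exists S0; split => // j.
case: (boolP (j \in S0)) => jS.
  exists 1; split => //; exists (fun i => (i == j)%:Z).
  by split; rewrite (bigD1 j) //= eqxx big1 ?addr0 ?mul1r // => i /andP [_ /negbTE ->];
     rewrite mul0r.
have nz : ~ zindep tr (j |: S0).
  move=> h.
  have : (#|j |: S0| <= transl_rank v)%N.
    by apply: (@leq_bigmax_cond _ (fun S => `[< zindep tr S >]) (fun S => #|S|)); apply/asboolP.
  by rewrite cardsU1 jS eS' add1n ltnn.
have sum_split : forall (c : 'I_p -> int) (F : 'I_p -> R),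
    \sum_(i in j |: S0) (c i)%:~R * F i = (c j)%:~R * F j + \sum_(i in S0) (c i)%:~R * F i.
  move=> c F; rewrite (bigD1 j) ?setU11 //=; congr (_ + _); apply: eq_bigl => i.
  rewrite !inE; case: (eqVneq i j) => [->|_]; rewrite ?eqxx /= ?andbF ?andbT //; exact: (esym (negbTE jS)).
have [c [h1 h2 hcj]] : exists c : 'I_p -> int,
    [/\ \sum_(i in j |: S0) (c i)%:~R * (tr i).1 = 0,
        \sum_(i in j |: S0) (c i)%:~R * (tr i).2 = 0 & c j != 0].
  apply: contrapT => H; apply: nz => c h1 h2.
  have cj : c j = 0.
    apply/eqP/negPn/negP => cj; apply: H; exists c; split => //.
  move: h1 h2; rewrite !sum_split cj !mul0r !add0r => h1 h2 i.
  case/setU1P => [-> //|iS]; exact: hS0 h1 h2 i iS.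
exists (c j); split => //; exists (fun i => - c i).
move: h1 h2; rewrite !sum_split => h1 h2.
split.
  rewrite (eq_bigr (fun i => - ((c i)%:~R * (tr i).1))); last by move=> i _; rewrite intrN mulNr.
  by rewrite sumrN; apply/eqP; rewrite -subr_eq0 opprK h1.
rewrite (eq_bigr (fun i => - ((c i)%:~R * (tr i).2))); last by move=> i _; rewrite intrN mulNr.
by rewrite sumrN; apply/eqP; rewrite -subr_eq0 opprK h2.
Qed.


Lemma rank_reduce : exists S0 : {set 'I_p}, #|S0| = transl_rank v /\
  exists D : int, D != 0 /\ exists f : 'I_p -> 'I_p -> int, forall j,
    D%:~R * (tr j).1 = \sum_(i in S0) (f j i)%:~R * (tr i).1 /\
    D%:~R * (tr j).2 = \sum_(i in S0) (f j i)%:~R * (tr i).2.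
Proof.
have [S0 [hS0 H]] := rank_basis.
exists S0; split => //.
have H' : forall j, exists de : int * ('I_p -> int), de.1 != 0 /\
    de.1%:~R * (tr j).1 = \sum_(i in S0) (de.2 i)%:~R * (tr i).1 /\
    de.1%:~R * (tr j).2 = \sum_(i in S0) (de.2 i)%:~R * (tr i).2.
  move=> j; have [d [dn [e he]]] := H j; by exists (d, e).
have [g hg] := choice H'.
exists (\prod_j (g j).1); split.
  by apply/prodf_neq0 => j _; case: (hg j).
exists (fun j i => (\prod_(k | k != j) (g k).1) * (g j).2 i) => j.
have [_ [e1 e2]] := hg j.
rewrite (bigD1 j) //=.
set P := \prod_(k | k != j) (g k).1.
have eD : ((g j).1 * P)%:~R = P%:~R * (g j).1%:~R :> R by rewrite intrM mulrC.
rewrite eD; split; rewrite -mulrA ?e1 ?e2 mulr_sumr; apply: eq_bigr => i _; by rewrite intrM mulrA.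
Qed.

Section Reduce.
Variable S0 : {set 'I_p}.
Variable D : int.
Variable f : 'I_p -> 'I_p -> int.
Hypothesis hf : forall j,
    D%:~R * (tr j).1 = \sum_(i in S0) (f j i)%:~R * (tr i).1 /\
    D%:~R * (tr j).2 = \sum_(i in S0) (f j i)%:~R * (tr i).2.

Definition Eb : int := \sum_j \sum_i `|f j i|.

Lemma Qrep2 m (w : nat -> 'I_p) : exists k : 'I_p -> int,
  (forall i, `|k i| <= m%:Z * Eb) /\
  D%:~R * (orb v ((0:R), (0:R)) w m).1 =
     (odd m)%:R * (2 * (D%:~R * (v i0).1)) + \sum_(i in S0) (k i)%:~R * (tr i).1 /\
  D%:~R * (orb v ((0:R), (0:R)) w m).2 =
     (odd m)%:R * (2 * (D%:~R * (v i0).2)) + \sum_(i in S0) (k i)%:~R * (tr i).2.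
Proof.
have [K [hK [e1 e2]]] := Qrep m w.
exists (fun i => \sum_j K j * f j i); split.
  move=> i; apply: le_trans (ler_norm_sum _ _ _) _.
  apply: le_trans (_ : \sum_j m%:Z * `|f j i| <= _).
    apply: ler_sum => j _; rewrite normrM; apply: ler_wpM2r => //.
    by rewrite ler_norml.
  rewrite -mulr_sumr; apply: ler_wpM2l => //.
  apply: ler_sum => j _; rewrite (bigD1 i) //= lerDl.
  by apply: sumr_ge0.
have key : forall (c : pt R -> R), (forall j, D%:~R * c (tr j) =
       \sum_(i in S0) (f j i)%:~R * c (tr i)) ->
    D%:~R * (\sum_i (K i)%:~R * c (tr i)) =
    \sum_(i in S0) (\sum_j K j * f j i)%:~R * c (tr i).
  move=> c hc.
  rewrite mulr_sumr (eq_bigr (fun j => (K j)%:~R * (D%:~R * c (tr j)))); last first.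
    by move=> j _; rewrite mulrCA.
  rewrite (eq_bigr (fun j => \sum_(i in S0) (K j)%:~R * ((f j i)%:~R * c (tr i)))); last first.
    by move=> j _; rewrite hc mulr_sumr.
  rewrite exchange_big /=; apply: eq_bigr => i _.
  rewrite rmorph_sum mulr_suml; apply: eq_bigr => j _.
  by rewrite mulrA -intrM.
split.
  rewrite e1 mulrDr -(key (fun q => q.1)); last by move=> j; case: (hf j).
  by congr (_ + _); ring.
rewrite e2 mulrDr -(key (fun q => q.2)); last by move=> j; case: (hf j).
by congr (_ + _); ring.
Qed.


Definition Mb n : nat := (n * `|Eb|%N)%N.

Definition Fn n := (bool * {ffun 'I_#|S0| -> 'I_(2 * Mb n).+1})%type.

Definition phi n (x : Fn n) : pt R :=
  ((D%:~R)^-1 * ((x.1)%:R * (2 * (D%:~R * (v i0).1)) +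
     \sum_(j < #|S0|) (((x.2 j : nat)%:Z - (Mb n)%:Z)%:~R * (tr (enum_val j)).1)),
   (D%:~R)^-1 * ((x.1)%:R * (2 * (D%:~R * (v i0).2)) +
     \sum_(j < #|S0|) (((x.2 j : nat)%:Z - (Mb n)%:Z)%:~R * (tr (enum_val j)).2))).

Hypothesis hD : D != 0.

Lemma Qphi n m (w : nat -> 'I_p) : (m <= n)%N ->
  exists x : Fn n, orb v ((0:R), (0:R)) w m = phi x.
Proof.
move=> mn.
have [k [hk [e1 e2]]] := Qrep2 m w.
have Eb0 : 0 <= Eb by apply: sumr_ge0 => j _; apply: sumr_ge0.
have hk' : forall i, - (Mb n)%:Z <= k i <= (Mb n)%:Z.
  move=> i; rewrite -ler_norml; apply: le_trans (hk i) _.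
  rewrite /Mb PoszM (gez0_abs Eb0); apply: ler_wpM2r => //.
have hb : forall i, (absz (k i + (Mb n)%:Z)%R < (2 * Mb n).+1)%N.
  move=> i; have := hk' i; rewrite ltnS => /andP [h1 h2].
  have h3 : 0 <= k i + (Mb n)%:Z by lia.
  rewrite -lez_nat (gez0_abs h3); lia.
exists (odd m, [ffun j => Ordinal (hb (enum_val j))]).
have hD' : (D%:~R : R) != 0 by rewrite intr_eq0.
have ek : forall j : 'I_#|S0|,
   (((Ordinal (hb (enum_val j)) : nat)%:Z - (Mb n)%:Z) = k (enum_val j)).
  move=> j /=; have := hk' (enum_val j) => /andP [h1 h2].
  have h3 : 0 <= k (enum_val j) + (Mb n)%:Z by lia.
  rewrite (gez0_abs h3); lia.
move: e1 e2; case: (orb v ((0:R), (0:R)) w m) => q1 q2 /= e1 e2.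
rewrite /phi /=; congr pair; apply: (mulfI hD'); rewrite mulVKf //.
  rewrite e1; congr (_ + _); rewrite big_enum_val; apply: eq_bigr => j _.
  by rewrite ffunE ek.
rewrite e2; congr (_ + _); rewrite big_enum_val; apply: eq_bigr => j _.
by rewrite ffunE ek.
Qed.

End Reduce.

End Rank.


Section LineCount.
Variable R : realType.
Variable p : nat.
Variable v : 'I_p -> pt R.

Definition ymap (sg : bool) (Q z : pt R) : pt R :=
  ((-1) ^+ sg * (z.1 - Q.1), (-1) ^+ sg * (z.2 - Q.2)).

Definition alphaf (c b' : 'I_p) (sg : bool) (a b : 'I_p) : R :=
  (-1) ^+ sg * (((v b).2 - (v a).2) * ((v b').1 - (v c).1) -
                ((v b).1 - (v a).1) * ((v b').2 - (v c).2)).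

Definition betaf (c b' : 'I_p) (sg : bool) (Q : pt R) (a : 'I_p) : R :=
  ((v c).1 * (v b').2 - (v c).2 * (v b').1)
  - (-1) ^+ sg * ((v a).1 - Q.1) * ((v b').2 - (v c).2)
  + (-1) ^+ sg * ((v a).2 - Q.2) * ((v b').1 - (v c).1).

Lemma con_aff c b' sg Q a b t :
  con v c b' (ymap sg Q (zl v a b t)) = alphaf c b' sg a b * t + betaf c b' sg Q a.
Proof. rewrite conE /ymap /zl /alphaf /betaf /=. ring. Qed.

Lemma leftward (al be t t' : R) : t < t' -> 0 < al * t' + be ->
  ~ (t <= - be / al /\ - be / al < t') -> 0 < al * t + be.
Proof.
move=> tt h nr.
case: (ltgtP al 0) => ha.
- nra.
- rewrite ltNge; apply/negP => h2; apply: nr; split.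
    by rewrite ler_pdivlMr //; lra.
  by rewrite ltr_pdivrMr //; lra.
- by rewrite ha in h *; lra.
Qed.

Lemma sgn2 (n : nat) : (-1) ^+ n * (-1) ^+ n = 1 :> R.
Proof. by rewrite -exprD addnn -mul2n exprM expr2 mulrNN mulr1 expr1n. Qed.

Lemma orb_back (y : pt R) s k m :
  orb v y s k = ymap (odd m) (orb v (opt R) (fun i => s (k + i)%N) m) (orb v y s (k + m)).
Proof.
rewrite orb_add.
have [e1 e2] := orb_aff v (orb v y s k) (fun i => s (k + i)%N) m.
rewrite /ymap e1 e2 signr_odd !addrK !mulrA sgn2 !mul1r.
by case: (orb v y s k).
Qed.


Section MB.
Hypothesis hp : (0 < p)%N.
Variable S0 : {set 'I_p}.
Variable D : int.
Variable f : 'I_p -> 'I_p -> int.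
Hypothesis hf : forall j,
    D%:~R * (side_transl v j).1 = \sum_(i in S0) (f j i)%:~R * (side_transl v i).1 /\
    D%:~R * (side_transl v j).2 = \sum_(i in S0) (f j i)%:~R * (side_transl v i).2.
Hypothesis hD : D != 0.

Definition su n (a : 'I_p) (u : n.-tuple 'I_p) : nat -> 'I_p := fun k => nth a u k.

Definition Jt n (a b : 'I_p) (u : n.-tuple 'I_p) (t : R) : Prop :=
  exists x, Dn v (su a u) x n /\ orb v x (su a u) n = zl v a b t.

Definition Mset n (a b : 'I_p) : {set n.-tuple 'I_p} :=
  [set u : n.-tuple 'I_p | `[< exists t, Jt a b u t >]].

Definition Gn n := ('I_p * 'I_p * bool * Fn S0 f n)%type.

Lemma Mset_bound n a b : (#|Mset n a b| <= #|{: Gn n}|.+1)%N.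
Proof.
pose rho (g : Gn n) : R :=
  - betaf g.1.1.1 g.1.1.2 g.1.2 (phi v hp D g.2) a / alphaf g.1.1.1 g.1.1.2 g.1.2 a b.
apply: (@count_intervals R _ _ _ (fun u t => Jt a b u t) rho).
- move=> u u' t _ _ ne [x [hx ex]] [x' [hx' ex']].
  move/negP: ne; apply; apply/eqP; apply: eq_from_tnth => i.
  rewrite !(tnth_nth a).
  have := back_uniq hx hx' (etrans ex (esym ex')).
  by move=> H; apply: (H i (ltn_ord i)).
- by move=> u; rewrite inE => /asboolP.
- move=> u t t' _ tt [x' [hx' ex']] nr.
  set s := su a u in hx' ex' *.
  pose z := zl v a b t.
  have [o1 o2] := orb_aff v (0, 0) s n.
  pose x : pt R := ((-1) ^+ n * (z.1 - (orb v (opt R) s n).1),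
                    (-1) ^+ n * (z.2 - (orb v (opt R) s n).2)).
  have ex : orb v x s n = z.
    have [e1 e2] := orb_aff v x s n.
    move: e1 e2; case: (orb v x s n) => y1 y2 /= -> ->.
    by rewrite /x /= !mulrA sgn2 !mul1r !subrK.
  exists x; split => // k kn c nc.
  have nk : n = (k + (n - k))%N by rewrite subnKC // ltnW.
  have [xQ eQ] := @Qphi R p v hp S0 D f hf hD n (n - k) (fun i => s (k + i)%N) (leq_subr _ _).
  have A := orb_back x s k (n - k); rewrite -nk ex eQ in A.
  have B := orb_back x' s k (n - k); rewrite -nk ex' eQ in B.
  have h' := hx' k kn c nc.
  rewrite -/(con v (s k) c (orb v x' s k)) B con_aff in h'.
  rewrite -/(con v (s k) c (orb v x s k)) A /z con_aff.
  apply: (leftward tt h') => hr.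
  exact: (nr (s k, c, odd (n - k), xQ)).
Qed.

End MB.

End LineCount.


Section StepA.
Variable R : realType.
Variable p : nat.
Variable v : 'I_p -> pt R.

Definition pre n (w : n.+1.-tuple 'I_p) : n.-tuple 'I_p :=
  [tuple tnth w (widen_ord (leqnSn n) i) | i < n].

Lemma codesP n (w : n.-tuple 'I_p) : w \in codes v n <->
  exists x s, itinerary v x s /\ forall i : 'I_n, tnth w i = s i.
Proof. by rewrite inE; split => /asboolP. Qed.

Lemma pre_codes n (w : n.+1.-tuple 'I_p) : w \in codes v n.+1 -> pre w \in codes v n.
Proof.
move/codesP => [x [s [hi hw]]]; apply/codesP; exists x, s; split => // i.
by rewrite tnth_mktuple hw.
Qed.

Lemma tuple_last n (w w' : n.+1.-tuple 'I_p) : pre w = pre w' ->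
  tnth w ord_max = tnth w' ord_max -> w = w'.
Proof.
move=> ep el; apply: eq_from_tnth => i.
case: (ltnP i n) => hi.
  have := congr1 (fun u => tnth u (Ordinal hi)) ep; rewrite !tnth_mktuple.
  by have -> : widen_ord (leqnSn n) (Ordinal hi) = i by apply: val_inj.
have -> : i = ord_max by apply: val_inj; apply/eqP; rewrite eqn_leq hi -ltnS ltn_ord.
exact: el.
Qed.

Lemma split_codes n (w w' : n.+1.-tuple 'I_p) : w \in codes v n.+1 -> w' \in codes v n.+1 ->
  pre w = pre w' -> tnth w ord_max != tnth w' ord_max ->
  exists b t, pre w \in Mset v n (tnth w ord_max) b /\ Jt v (tnth w ord_max) b (pre w) t.
Proof.
move=> /codesP [x [s [hi hw]]] /codesP [x' [s' [hi' hw']]] ep ne.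
have ss : forall k, (k < n)%N -> s k = s' k.
  move=> k kn.
  have := congr1 (fun u => tnth u (Ordinal kn)) ep; rewrite !tnth_mktuple hw hw' /=.
  done.
have hx : Dn v s x n by move=> k _; exact: hi k.
have hx' : Dn v s x' n.
  apply: (@Dn_ext _ _ _ s'); first by move=> i /ss ->.
  by move=> k _; exact: hi' k.
have ea : tnth w ord_max = s n by rewrite hw.
have ea' : tnth w' ord_max = s' n by rewrite hw'.
have ha : inX v (s n) (orb v x s n) by apply: hi.
have ha' : inX v (s' n) (orb v x' s n).
  by rewrite (orb_ext v x' (s' := s')) //; apply: hi'.
rewrite ea ea' in ne.
have [x'' [b [t [h1 h2 h3]]]] := split_line hx hx' ha ha' ne.
have su_s : forall k, (k < n)%N -> su (s n) (pre w) k = s k.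
  move=> k kn; rewrite /su -(tnth_nth _ _ (Ordinal kn)) tnth_mktuple hw /=.
  done.
have J : Jt v (s n) b (pre w) t.
  exists x''; split.
    by apply: (Dn_ext (s := s)) => // i /su_s ->.
  by rewrite (orb_ext v x'' (s' := s)) // => i /su_s.
rewrite ea; exists b, t; split => //.
by rewrite inE; apply/asboolP; exists t.
Qed.

End StepA.


Lemma sum_mem_le (T : finType) (C M : {set T}) :
  (\sum_(u in C) (u \in M : nat) <= #|M|)%N.
Proof.
apply: (@leq_trans (\sum_u (u \in M : nat))).
  by rewrite [X in (_ <= X)%N](bigID (mem C)) /= leq_addr.
rewrite -sum1_card [X in (_ <= X)%N]big_mkcond /=; apply: leq_sum => u _; by case: (u \in M).
Qed.

Section Final.
Variable R : realType.
Variable p : nat.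
Variable v : 'I_p -> pt R.
Hypothesis hp : (0 < p)%N.

Lemma stepA n : (#|codes v n.+1| <=
   #|codes v n| + (p - 1) * \sum_a \sum_b #|Mset v n a b|)%N.
Proof.
set C := codes v n; set C1 := codes v n.+1.
rewrite -sum1_card (partition_big (@pre p n) (mem C)) /=; last by move=> w; exact: pre_codes.
have bound : forall u, u \in C ->
   (\sum_(w in C1 | pre w == u) 1 <= 1 + (p - 1) * \sum_a \sum_b (u \in Mset v n a b : nat))%N.
  move=> u uC.
  rewrite (eq_bigl (fun w => w \in [set w in C1 | pre w == u])); last first.
    by move=> w; rewrite inE.
  rewrite sum1_card.
  set Fu := [set w in C1 | pre w == u].
  case: (boolP [exists a, exists b, u \in Mset v n a b]).
  - case/existsP => a /existsP [b hab].
    have S1 : (1 <= \sum_a \sum_b (u \in Mset v n a b : nat))%N.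
      rewrite (bigD1 a) //= (bigD1 b) //= hab; by rewrite -addnA leq_addr.
    have : (#|Fu| <= p)%N.
      have inj : {in Fu &, injective (fun w : n.+1.-tuple 'I_p => tnth w ord_max)}.
        move=> w w'; rewrite !inE => /andP [_ /eqP e] /andP [_ /eqP e'] el.
        by apply: tuple_last => //; rewrite e e'.
      rewrite -(card_in_imset inj); apply: leq_trans (max_card _) _.
      by rewrite card_ord.
    move=> h; apply: leq_trans h _.
    have : (p <= 1 + (p - 1))%N by lia.
    move=> h; apply: leq_trans h _; rewrite leq_add2l.
    by rewrite -{1}(muln1 (p - 1)%N) leq_mul2l S1 orbT.
  - move=> nex; apply: leq_trans (leq_addr _ _).
    apply/card_le1_eqP => w w'; rewrite !inE => /andP [wC /eqP e] /andP [w'C /eqP e'].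
    have ep : pre w = pre w' by rewrite e e'.
    case: (eqVneq (tnth w ord_max) (tnth w' ord_max)) => el.
      exact: tuple_last.
    have wC2 : w \in codes v n.+1 by apply/codesP; apply/asboolP.
    have w'C2 : w' \in codes v n.+1 by apply/codesP; apply/asboolP.
    have [b [t [hm _]]] := split_codes wC2 w'C2 ep el.
    move/negP: nex; case; apply/existsP; exists (tnth w ord_max); apply/existsP.
    by exists b; rewrite -e.
apply: (@leq_trans (\sum_(u in C) (1 + (p - 1) * \sum_a \sum_b (u \in Mset v n a b : nat)))%N).
  by apply: leq_sum.
rewrite big_split /= sum1_card leq_add2l -big_distrr /= leq_mul2l; apply/orP; right.
rewrite exchange_big /=; apply: leq_sum => a _.
rewrite exchange_big /=; apply: leq_sum => b _.
exact: sum_mem_le.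
Qed.

End Final.


Lemma leq_expb (m n e : nat) : (m <= n)%N -> (m ^ e <= n ^ e)%N.
Proof. move=> h; elim: e => [//|e IH]; rewrite !expnS; exact: leq_mul. Qed.

Lemma final_bound (R : realType) (p : nat) (v : 'I_p -> pt R) : (0 < p)%N ->
  exists (C : R) (N : nat), forall n : nat, (N <= n)%N ->
    (complexity v n)%:R <= C * (n%:R) ^+ (transl_rank v + 2).
Proof.
move=> hp.
have [S0 [hS0 [D [hD [f hf]]]]] := rank_reduce v.
set r := transl_rank v in hS0 *.
set E := `|Eb f|%N.
have cardG : forall n, #|{: Gn S0 f n}| = (p * p * 2 * (2 * ((2 * (n * E)).+1) ^ r))%N.
  move=> n; rewrite !card_prod card_bool card_ffun !card_ord hS0 /Mb.
  done.
pose B n := ((p - 1) * (p * (p * (p * p * 2 * (2 * ((2 * (n * E)).+1) ^ r)).+1)))%N.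
have stepB : forall n, (complexity v n.+1 <= complexity v n + B n)%N.
  move=> n; apply: leq_trans (stepA v hp n) _; rewrite leq_add2l /B leq_mul2l; apply/orP; right.
  apply: (@leq_trans (\sum_(a < p) \sum_(b < p) #|{: Gn S0 f n}|.+1)).
    apply: leq_sum => a _; apply: leq_sum => b _.
    exact: (Mset_bound hp hf hD).
  by rewrite !sum_nat_const !card_ord cardG.
have Bmono : forall n m, (n <= m)%N -> (B n <= B m)%N.
  move=> n m nm; rewrite /B.
  have : (((2 * (n * E)).+1) ^ r <= ((2 * (m * E)).+1) ^ r)%N.
    apply: leq_expb; rewrite ltnS leq_mul2l leq_mul2r nm; by rewrite !orbT.
  move=> XY.
  apply: leq_mul (leqnn _) _; apply: leq_mul (leqnn _) _; apply: leq_mul (leqnn _) _.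
  rewrite ltnS; apply: leq_mul (leqnn _) _; exact: leq_mul (leqnn _) XY.
have cB : forall n, (complexity v n <= 1 + n * B n)%N.
  elim=> [|k IH].
    rewrite /complexity; apply: leq_trans (max_card _) _.
    by rewrite card_tuple expn0.
  apply: leq_trans (stepB k) _.
  have := Bmono k k.+1 (leqnSn k); move: (B k) (B k.+1) IH => b1 b2 IH; nia.
pose K := ((p - 1) * (p * (p * (p * p * 2 * (2 * (2 * E + 1) ^ r)).+1)))%N.
exists (1 + K)%:R, 1%N => n n1.
rewrite -natrX -natrM ler_nat.
have hX : (((2 * (n * E)).+1) ^ r <= (2 * E + 1) ^ r * n ^ r)%N.
  rewrite -expnMn; apply: leq_expb; nia.
have hZ : (1 <= n ^ r)%N by rewrite expn_gt0 n1.
have hBK : (B n <= K * n ^ r)%N.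
  rewrite /B /K.
  move: hX hZ; move: (((2 * (n * E)).+1) ^ r)%N ((2 * E + 1) ^ r)%N (n ^ r)%N => X Y Z hX hZ.
  set W := (p * p * 2 * (2 * Y))%N.
  have eW : (p * p * 2 * (2 * (Y * Z)) = W * Z)%N by rewrite /W; ring.
  have h2 : ((p * p * 2 * (2 * (Y * Z))).+1 <= W.+1 * Z)%N.
    rewrite eW mulSn; lia.
  have h1 : ((p - 1) * (p * (p * (p * p * 2 * (2 * X)).+1)) <=
             (p - 1) * (p * (p * (p * p * 2 * (2 * (Y * Z))).+1)))%N.
    apply: leq_mul (leqnn _) _; apply: leq_mul (leqnn _) _; apply: leq_mul (leqnn _) _.
    rewrite ltnS; apply: leq_mul (leqnn _) _; exact: leq_mul (leqnn _) hX.
  apply: leq_trans h1 _.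
  have -> : ((p - 1) * (p * (p * W.+1)) * Z = (p - 1) * (p * (p * (W.+1 * Z))))%N by ring.
  apply: leq_mul (leqnn _) _; apply: leq_mul (leqnn _) _; exact: leq_mul (leqnn _) h2.
have e1 : (n * n ^ r = n ^ (r + 1))%N by rewrite addn1 expnS.
have e2 : (n ^ (r + 1) <= n ^ (r + 2))%N by apply: leq_pexp2l => //; rewrite leq_add2l.
have e3 : (1 <= n ^ (r + 1))%N by rewrite expn_gt0 n1.
have := cB n.
move: hBK e1 e2 e3; move: (B n) (n ^ r)%N (n ^ (r + 1))%N (n ^ (r + 2))%N => b Z W V.
nia.
Qed.

Theorem mainTheorem13 (R : realType) (p : nat) (v : 'I_p -> pt R) :
  (3 <= p)%N -> convex_ccw v ->
  exists (C : R) (N : nat), forall n : nat, (N <= n)%N ->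
    (complexity v n)%:R <= C * (n%:R) ^+ (transl_rank v + 2).
Proof.
move=> hp _; apply: final_bound.
by apply: leq_trans hp.
Qed.
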